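(* For every positive integer $F$, the family $\mathrm{Sat}(F)$ is a covariety. Its minimum is $\Delta(F+1)=\{0\}\cup\{x\in\mathbb{N}\mid x\ge F+1\}$.
   Context: A numerical semigroup is a subset $S\subseteq\mathbb{N}$ closed under addition, containing $0$, with $\mathbb{N}\setminus S$ finite. Its Frobenius number $\mathrm{F}(S)$ is the largest integer not in $S$, and its multiplicity $\mathrm{m}(S)$ is $\min(S\setminus\{0\})$. For $A\subseteq\mathbb{N}$ and $a\in A$, let $\mathrm{d}_A(a)=\gcd\{x\in A\mid x\le a\}$. A numerical semigroup $S$ is saturated if $s+\mathrm{d}_S(s)\in S$ for all $s\in S\setminus\{0\}$. For a positive integer $F$, $\mathrm{Sat}(F)$ denotes the set of all saturated numerical semigroups $S$ with $\mathrm{F}(S)=F$. For $m\in\mathbb{N}$, $\Delta(m)=\{0\}\cup\{x\in\mathbb{N}\mid x\ge m\}$. A covariety is a nonempty family $\mathcal{C}$ of numerical semigroups such that: (1) $\mathcal{C}$ has a minimum $\Delta(\mathcal{C})$ with respect to inclusion; (2) if $S,T\in\mathcal{C}$ then $S\cap T\in\mathcal{C}$; (3) if $S\in\mathcal{C}$ and $S\neq\Delta(\mathcal{C})$, then $S\setminus\{\mathrm{m}(S)\}\in\mathcal{C}$. *)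

(* Defs.v *)
From mathcomp Require Import all_boot.
Set Implicit Arguments. Unset Strict Implicit. Unset Printing Implicit Defensive.

Definition numerical_semigroup (S : pred nat) : Prop :=
  [/\ S 0, (forall x y, S x -> S y -> S (x + y)) & (exists N, forall x, N <= x -> S x)].

Definition is_frobenius (S : pred nat) (F : nat) : Prop :=
  ~~ S F /\ (forall x, F < x -> S x).

Definition is_multiplicity (S : pred nat) (m : nat) : Prop :=
  [/\ 0 < m, S m & forall x, 0 < x < m -> ~~ S x].

Definition dA (A : pred nat) (a : nat) : nat :=
  \big[gcdn/0]_(0 <= x < a.+1 | A x) x.

Definition saturated (S : pred nat) : Prop :=
  forall s, S s -> s != 0 -> S (s + dA S s).

Definition Sat (F : nat) (S : pred nat) : Prop :=
  [/\ numerical_semigroup S, saturated S & is_frobenius S F].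

Definition Delta (m : nat) : pred nat := fun x => (x == 0) || (m <= x).

Definition subset_nat (A B : pred nat) : Prop := forall x, A x -> B x.

Definition is_minimum (C : pred nat -> Prop) (D : pred nat) : Prop :=
  C D /\ (forall S, C S -> subset_nat D S).

Definition covariety (C : pred nat -> Prop) : Prop :=
  (forall S, C S -> numerical_semigroup S) /\
  exists D : pred nat,
    [/\ is_minimum C D,
        (forall S T, C S -> C T -> C (fun x => S x && T x)) &
        (forall S m, C S -> ~ (S =i D) -> is_multiplicity S m ->
                     C (fun x => S x && (x != m)))].

(* Main.v *)
Require Import Defs.
From mathcomp Require Import all_boot.
Set Implicit Arguments. Unset Strict Implicit.

Lemma dA_dvd (A : pred nat) a x : x <= a -> A x -> dA A a %| x.
Proof.
move=> xa Ax; rewrite /dA big_mkord.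
have xa1 : x < a.+1 by [].
by apply: (biggcdn_inf (Ordinal xa1)).
Qed.

Lemma dvd_dA (A : pred nat) a m : (forall x, x <= a -> A x -> m %| x) -> m %| dA A a.
Proof.
move=> H; rewrite /dA big_mkord; apply/dvdn_biggcdP => i Ai.
by apply: H => //; rewrite -ltnS.
Qed.

Lemma dA_pos (A : pred nat) s : A s -> s != 0 -> 0 < dA A s.
Proof.
move=> As s0; have := dA_dvd (leqnn s) As.
by case: (dA A s) => //; rewrite dvd0n => /eqP E; rewrite E in s0.
Qed.

Lemma sat_mult S : saturated S -> forall g s, S s -> s != 0 -> dA S s <= g ->
  forall k, S (s + k * dA S s).
Proof.
move=> sat; elim=> [|g IHg] s Ss s0 dg.
  by have := dA_pos Ss s0; rewrite leqn0 in dg; rewrite (eqP dg).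
elim=> [|k IHk]; first by rewrite mul0n addn0.
set d := dA S s in dg IHk *.
have t0 : s + k * d != 0 by rewrite addn_eq0 negb_and s0.
have ddiv : dA S (s + k * d) %| d.
  apply: dvd_dA => x xs Sx; apply: dA_dvd => //; exact: (leq_trans xs (leq_addr _ _)).
have dpos := dA_pos IHk t0.
have dpos' : 0 < d := dA_pos Ss s0.
case: (eqVneq (dA S (s + k * d)) d) => [E|NE].
  by move: (sat _ IHk t0); rewrite E mulSn [d + _]addnC addnA.
have lt : dA S (s + k * d) < d.
  by rewrite ltn_neqAle NE dvdn_leq.
have := IHg _ IHk t0 _ (d %/ dA S (s + k * d)).
rewrite divnK // mulSn [d + _]addnC addnA; apply.
by rewrite -ltnS (leq_trans lt dg).
Qed.

Lemma sat_dvd S s x : saturated S -> S s -> s != 0 -> dA S s %| x -> S (s + x).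
Proof.
move=> sat Ss s0 /dvdnP [k ->]; exact: (sat_mult sat Ss s0 (leqnn _)).
Qed.

Lemma dA_sub (A B : pred nat) a : (forall x, A x -> B x) -> dA B a %| dA A a.
Proof. move=> AB; apply: dvd_dA => x xa Ax; apply: dA_dvd => //; exact: AB. Qed.

Lemma Sat_Delta F x S : Sat F S -> Delta F.+1 x -> S x.
Proof.
case=> [[S0 _ _] _ [_ HF]]; rewrite /Delta; case/orP=> [/eqP->|] //.
exact: HF.
Qed.

Theorem proposition16 (F : nat) (hF : 0 < F) :
  covariety (Sat F) /\ is_minimum (Sat F) (Delta F.+1).
Proof.
have DSat : Sat F (Delta F.+1).
  split.
  - split; first by [].
    + move=> x y; rewrite /Delta; case/orP=> [/eqP->|hx] //.
      by move=> _; rewrite (leq_trans hx (leq_addr _ _)) orbT.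
    + by exists F.+1 => x hx; rewrite /Delta hx orbT.
  - move=> s; rewrite /Delta; case/orP=> [/eqP->|hs] // _.
    by rewrite (leq_trans hs (leq_addr _ _)) orbT.
  - split; first by rewrite /Delta ltnn orbF -lt0n hF.
    by move=> x hx; rewrite /Delta hx orbT.
have Min : is_minimum (Sat F) (Delta F.+1).
  by split=> // S SS x; apply: Sat_Delta.
split=> //; split; first by move=> S [].
exists (Delta F.+1); split=> //.
- move=> S T [[S0 SD [N SN]] Ssat [SF SFr]] [[T0 TD [M TM]] Tsat [TF TFr]].
  split.
  + split; first by rewrite S0 T0.
    * by move=> x y /andP[Sx Tx] /andP[Sy Ty]; rewrite SD // TD.
    * exists (N + M) => x hx; rewrite SN ?TM //.
      - exact: leq_trans (leq_addl _ _) hx.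
      - exact: leq_trans (leq_addr _ _) hx.
  + move=> s /andP[Ss Ts] s0; apply/andP; split.
    * apply: sat_dvd => //; apply: dA_sub => x /andP[]//.
    * apply: sat_dvd => //; apply: dA_sub => x /andP[]//.
  + split; first by rewrite (negbTE SF).
    by move=> x hx; rewrite SFr ?TFr.
- move=> S m SS NE [m0 Sm mmin].
  move: (SS) => [[S0 SD [N SN]] Ssat [SF SFr]].
  have mF : m < F.
    case: (ltnP F m) => [Fm|mF].
      exfalso; apply: NE => x; rewrite !unfold_in /Delta.
      case: (eqVneq x 0) => [->|x0] /=; first by rewrite S0.
      case: (leqP F.+1 x) => hx; first by rewrite SFr.
      by apply/negbTE/mmin; rewrite lt0n x0 (leq_trans hx).
    by rewrite ltn_neqAle mF andbT; apply: contraNneq SF => <-.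
  have big : forall x, S x -> x != 0 -> m <= x.
    move=> x Sx x0; rewrite leqNgt; apply/negP => xm.
    by move: (mmin x); rewrite lt0n x0 xm Sx => /(_ isT).
  split.
  + split; first by rewrite /= S0 eq_sym -lt0n m0.
    * move=> x y /andP[Sx xm] /andP[Sy ym]; rewrite SD //=.
      case: (eqVneq x 0) => [->//|x0]; case: (eqVneq y 0) => [->|y0]; first by rewrite addn0.
      have := big _ Sy y0; rewrite -lt0n in x0.
      by move=> my; rewrite neq_ltn (leq_trans _ (leq_add (leqnn x) my)) ?orbT // -{1}(add0n m) ltn_add2r.
    * exists (N + m.+1) => x hx; rewrite SN; last exact: leq_trans (leq_addr _ _) hx.
      by rewrite /= neq_ltn (leq_trans _ hx) ?orbT // leq_addl.
  + move=> s /andP[Ss sm] s0; apply/andP; split.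
    * apply: sat_dvd => //; apply: dA_sub => x /andP[]//.
    * have := big _ Ss s0; rewrite leq_eqVlt eq_sym (negbTE sm) /= => ms.
      by rewrite neq_ltn (leq_trans ms (leq_addr _ _)) orbT.
  + split; first by rewrite (negbTE SF).
    move=> x hx; rewrite SFr //=; rewrite neq_ltn (ltn_trans mF hx) orbT //.
Qed.
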